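(* Let a power network have node set $V$, initial active link set $\mathcal{E}^0$, link weights $w\in\mathbb{R}_{\ge 0}^{\mathcal{E}^0}$, link capacities $c\in\mathbb{R}_{\ge 0}^{\mathcal{E}^0}$, initial balanced supply-demand vector $p^0\in\mathcal{B}_{\mathcal{E}^0}$, and horizon $N\ge 1$. Then for every aggregated state $(\mathcal{E},P)$ reachable from $(\mathcal{E}^0,\{p^0\})$ under the aggregated dynamics, and for every $t\in\{1,\dots,N\}$, $$\mathbb{J}_t(\mathcal{E},P)=\sup_{p\in P} J_t(\mathcal{E},p).$$
   Context: Network model. The network is a finite undirected multigraph with node set $V$ and link set $\mathcal{E}^0$; each link is given an arbitrary reference orientation. For an active link set $\mathcal{E}\subseteq\mathcal{E}^0$, let $A$ be the node–link incidence matrix of $(V,\mathcal{E})$ (the column of link $i$ has $+1$ at its tail, $-1$ at its head, $0$ elsewhere), $W=\mathrm{diag}(w_i)_{i\in\mathcal{E}}$, $L(\mathcal{E})=AWA^\top$, and $L^\dagger(\mathcal{E})$ its Moore–Penrose pseudo-inverse. Let $\mathcal{B}_{\mathcal{E}}=\{u\in\mathbb{R}^V:\sum_{v\in V^{(i)}}u_v=0\text{ for every connected component }V^{(i)}\text{ of }(V,\mathcal{E})\}$. For $p\in\mathcal{B}_{\mathcal{E}}$ the link flow is $f(\mathcal{E},p)=WA^\top L^\dagger(\mathcal{E})p\in\mathbb{R}^{\mathcal{E}}$. Nodes are supply nodes $V_+$, demand nodes $V_-$ or transmission nodes; $s\in\{1,0,-1\}^V$ has $s_v=1$ on $V_+$,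 $s_v=-1$ on $V_-$, $s_v=0$ otherwise. $\mathrm{sign}(x)=1$ if $x\ge0$ and $-1$ if $x<0$. For $p\in\mathbb{R}^V$, $\mathrm{cube}(p)=\{u\in\mathbb{R}^V: 0\le \mathrm{sign}(p_v)u_v\le|p_v|\ \forall v\}$, and for a set $P$, $\mathrm{cube}(P)=\bigcup_{p\in P}\mathrm{cube}(p)$. Admissible controls: $U(\mathcal{E},p)=\mathrm{cube}(p)\cap\mathcal{B}_{\mathcal{E}}$, and for a set $P$, $U(\mathcal{E},P)=\mathcal{B}_{\mathcal{E}}\cap\mathrm{cube}(P)$. For $u\in\mathcal{B}_{\mathcal{E}}$, $\mathcal{F}_{\mathcal{E}}(\mathcal{E},u)=\{i\in\mathcal{E}:|f_i(\mathcal{E},u)|\le c_i\}$. Unaggregated values: $J_1(\mathcal{E},p)=\max\{s^\top u: u\in U(\mathcal{E},p),\ |f_i(\mathcal{E},u)|\le c_i\ \forall i\in\mathcal{E}\}$ and, for $t=2,\dots,N$, $J_t(\mathcal{E},p)=\sup_{u\in U(\mathcal{E},p)}J_{t-1}(\mathcal{F}_{\mathcal{E}}(\mathcal{E},u),u)$. Aggregation. For $\beta\in\{-1,0,1\}^{\mathcal{E}}$, $U(\mathcal{E},P,\beta)=\{u\in U(\mathcal{E},P): f_i(\mathcal{E},u)<-c_i\text{ if }\beta_i=-1;\ |f_i(\mathcal{E},u)|\le c_i\text{ if }\beta_i=0;\ f_i(\mathcal{E},u)>c_i\text{ if }\beta_i=1;\ \forall i\in\mathcal{E}\}$, and $\mathbb{U}(\mathcal{E},P)$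 is the collection of the nonempty sets $U(\mathcal{E},P,\beta)$, $\beta\in\{-1,0,1\}^{\mathcal{E}}$. For a set $U$ of vectors, $\mathcal{F}_{\mathcal{E}}(\mathcal{E},U)=\{i\in\mathcal{E}:|f_i(\mathcal{E},u)|\le c_i\ \forall u\in U\}$. Aggregated dynamics starting at $(\mathcal{E}^0,\{p^0\})$: $(\mathcal{E}^{t+1},P^{t+1})=(\mathcal{F}_{\mathcal{E}}(\mathcal{E}^t,U^t),U^t)$ with $U^t\in\mathbb{U}(\mathcal{E}^t,P^t)$. Aggregated values: $\mathbb{J}_1(\mathcal{E},P)=\max\{s^\top u: u\in U(\mathcal{E},\mathrm{cl}\,P),\ |f_i(\mathcal{E},u)|\le c_i\ \forall i\in\mathcal{E}\}$ ($\mathrm{cl}$ = closure) and, for $t\in\{1,\dots,N-1\}$, $\mathbb{J}_{t+1}(\mathcal{E},P)=\max_{U\in\mathbb{U}(\mathcal{E},P)}\mathbb{J}_t(\mathcal{F}_{\mathcal{E}}(\mathcal{E},U),U)$. *)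

(* Defs.v *)
From HB Require Import structures.
From mathcomp Require Import all_boot all_order all_algebra.
From mathcomp Require Import all_classical all_reals all_analysis.
Set Implicit Arguments. Unset Strict Implicit. Unset Printing Implicit Defensive.
Import Order.TTheory GRing.Theory Num.Theory.
Import numFieldNormedType.Exports.
Local Open Scope classical_set_scope.
Local Open Scope ring_scope.

Inductive tri := TNeg | TZero | TPos.

Section PowerNetwork.
Variable R : realType.
(* nodes V = 'I_n; links E^0 = 'I_m (a multigraph: link i joins tl i and hd i,
   with reference orientation tl i -> hd i). *)
Variables (n m : nat) (tl hd : 'I_m -> 'I_n).
Variables (w c : 'I_m -> R).
Variables (Vp Vm : {set 'I_n}).

Definition pinv (k : nat) (M : 'M[R]_k) : 'M[R]_k :=
  xget 0 [set X : 'M[R]_k | [/\ M *m X *m M = M, X *m M *m X = X,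
                              (M *m X)^T = M *m X & (X *m M)^T = X *m M]].

Definition incid : 'M[R]_(n, m) :=
  \matrix_(v, i) ((v == tl i)%:R - (v == hd i)%:R).

(* W restricted to the active links E (inactive links have weight 0,
   so that L(E) = A W A^T is the weighted Laplacian of (V, E)). *)
Definition Wmx (E : {set 'I_m}) : 'M[R]_m :=
  diag_mx (\row_i ((i \in E)%:R * w i)).

Definition Lap (E : {set 'I_m}) : 'M[R]_n := incid *m Wmx E *m incid^T.

Definition flow (E : {set 'I_m}) (u : 'cV[R]_n) (i : 'I_m) : R :=
  w i * (incid^T *m pinv (Lap E) *m u) i 0.

Definition adj (E : {set 'I_m}) : rel 'I_n := fun x y =>
  [exists i in E, ((tl i == x) && (hd i == y)) || ((tl i == y) && (hd i == x))].

Definition Bal (E : {set 'I_m}) : set 'cV[R]_n :=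
  [set u | forall v : 'I_n, \sum_(x | connect (adj E) v x) u x 0 = 0].

Definition svec : 'cV[R]_n := \col_v ((v \in Vp)%:R - (v \in Vm)%:R).

Definition sgn (x : R) : R := if 0 <= x then 1 else -1.

Definition cube (p : 'cV[R]_n) : set 'cV[R]_n :=
  [set u | forall v, 0 <= sgn (p v 0) * u v 0 <= `|p v 0|].

Definition cubeS (P : set 'cV[R]_n) : set 'cV[R]_n :=
  [set u | exists2 p, P p & cube p u].

Definition Up (E : {set 'I_m}) (p : 'cV[R]_n) : set 'cV[R]_n := cube p `&` Bal E.
Definition UP (E : {set 'I_m}) (P : set 'cV[R]_n) : set 'cV[R]_n := Bal E `&` cubeS P.

Definition feasible (E : {set 'I_m}) (u : 'cV[R]_n) : Prop :=
  forall i, i \in E -> `|flow E u i| <= c i.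

Definition Fu (E : {set 'I_m}) (u : 'cV[R]_n) : {set 'I_m} :=
  [set i in E | `|flow E u i| <= c i].

Definition obj (u : 'cV[R]_n) : R := (svec^T *m u) 0 0.

(* Unaggregated values: Jrec k = J_{k+1} *)
Definition J1 (E : {set 'I_m}) (p : 'cV[R]_n) : \bar R :=
  ereal_sup [set (obj u)%:E | u in [set u | Up E p u /\ feasible E u]].

Fixpoint Jrec (k : nat) (E : {set 'I_m}) (p : 'cV[R]_n) : \bar R :=
  match k with
  | 0 => J1 E p
  | k'.+1 => ereal_sup [set Jrec k' (Fu E u) u | u in Up E p]
  end.

Definition J (t : nat) := Jrec t.-1.

Definition Ubeta (E : {set 'I_m}) (P : set 'cV[R]_n) (beta : 'I_m -> tri)
  : set 'cV[R]_n :=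
  [set u | UP E P u /\ forall i, i \in E ->
     match beta i with
     | TNeg => flow E u i < - c i
     | TZero => `|flow E u i| <= c i
     | TPos => flow E u i > c i
     end].

Definition UU (E : {set 'I_m}) (P : set 'cV[R]_n) : set (set 'cV[R]_n) :=
  [set U | exists beta, U = Ubeta E P beta /\ U !=set0].

Definition FU (E : {set 'I_m}) (U : set 'cV[R]_n) : {set 'I_m} :=
  [set i in E | `[< forall u, U u -> `|flow E u i| <= c i >]].

Definition JJ1 (E : {set 'I_m}) (P : set 'cV[R]_n) : \bar R :=
  ereal_sup [set (obj u)%:E | u in [set u | UP E (closure P) u /\ feasible E u]].

Fixpoint JJrec (k : nat) (E : {set 'I_m}) (P : set 'cV[R]_n) : \bar R :=
  match k with
  | 0 => JJ1 E P
  | k'.+1 => ereal_sup [set JJrec k' (FU E U) U | U in UU E P]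
  end.

Definition JJ (t : nat) := JJrec t.-1.

Inductive reachable (p0 : 'cV[R]_n) : {set 'I_m} -> set 'cV[R]_n -> Prop :=
  | reach0 : reachable p0 [set: 'I_m]%SET [set p0]
  | reachS E P U : reachable p0 E P -> UU E P U -> reachable p0 (FU E U) U.

End PowerNetwork.

(* Main.v *)
Require Import Defs.
From HB Require Import structures.
From mathcomp Require Import all_boot all_order all_algebra.
From mathcomp Require Import all_classical all_reals all_analysis.
From mathcomp Require Import lra.
Import Order.TTheory GRing.Theory Num.Theory.
Import numFieldNormedType.Exports.
Local Open Scope classical_set_scope.
Local Open Scope ring_scope.
Set Implicit Arguments. Unset Strict Implicit.

Lemma clos_near (R: realType) n (P : set 'cV[R]_n) p a : closure P p -> 0 < a ->
  exists2 q, P q & forall v, `|p v 0 - q v 0| < a.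
Proof.
move=> cp a0.
have := cp (ball p a) (nbhsx_ballx _ _ a0).
case=> q [Pq bq]; exists q => // v.
case: bq => _ /(_ v 0).
by rewrite /ball /=.
Qed.

Lemma scal_cube (R: realType) (p q u d : R) : 0 < d -> d <= 1/2 ->
  0 <= sgn p * u <= `|p| ->
  `|p - q| < d * (if p == 0 then 1 else `|p|) ->
  0 <= sgn q * ((1-d) * u) <= `|q|.
Proof.
move=> d0 d1 /andP[h1 h2] h3.
case: (eqVneq p 0) => [p0|pn0].
  move: h1 h2; rewrite p0 /sgn lexx normr0 mul1r => h1 h2.
  have -> : u = 0 by apply/eqP; rewrite eq_le h1 h2.
  by rewrite !mulr0 lexx normr_ge0.
move: h3; rewrite (negbTE pn0) ltr_norml => /andP[h3 h4].
move: h1 h2 h3 h4; rewrite /sgn.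
case: (lerP 0 p) => hp; case: (lerP 0 q) => hq;
  rewrite ?(ger0_norm hp) ?(ltr0_norm hp) ?(ger0_norm hq) ?(ltr0_norm hq) => h1 h2 h3 h4;
  apply/andP; split; nra.
Qed.

Lemma FU_eq (R: realType) n m (tl hd : 'I_m -> 'I_n) (w c : 'I_m -> R) E P beta u :
  Ubeta tl hd w c E P beta u ->
  FU tl hd w c E (Ubeta tl hd w c E P beta) = Fu tl hd w c E u.
Proof.
move=> Hu; have [_ Hb] := Hu.
apply/setP=> i; rewrite !inE; case iE: (i \in E) => //=.
apply/asboolP/idP; first by move/(_ u Hu).
move=> hu u' [_ Hb'].
have := Hb i iE; have := Hb' i iE; move: hu; rewrite ler_norml => /andP[h3 h4].
case: (beta i) => //.
- by move=> _ h; have := lt_le_trans h h3; rewrite ltxx.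
- by move=> _ h; have := le_lt_trans h4 h; rewrite ltxx.
Qed.

Lemma step (R: realType) n m (tl hd : 'I_m -> 'I_n) (w c : 'I_m -> R) Vp Vm k :
  (forall E P, JJrec tl hd w c Vp Vm k E P =
     ereal_sup [set Jrec tl hd w c Vp Vm k E p | p in P]) ->
  forall E P, JJrec tl hd w c Vp Vm k.+1 E P =
     ereal_sup [set Jrec tl hd w c Vp Vm k.+1 E p | p in P].
Proof.
move=> IH E P /=.
apply/eqP; rewrite eq_le; apply/andP; split.
  apply: ge_ereal_sup => _ [U [beta [UE _]] <-].
  rewrite IH; apply: ge_ereal_sup => _ [u Uu <-].
  move: (Uu); rewrite UE => Uu'.
  rewrite (FU_eq Uu').
  case: Uu' => [[Bu [p Pp cp]] _].
  apply: (@le_trans _ _ (Jrec tl hd w c Vp Vm k.+1 E p)).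
    by apply: ereal_sup_ubound; exists u => //; split.
  by apply: ereal_sup_ubound; exists p.
apply: ge_ereal_sup => _ [p Pp <-] /=.
apply: ge_ereal_sup => _ [u [cu Bu] <-].
pose beta := fun i => if flow tl hd w E u i < - c i then TNeg
  else if c i < flow tl hd w E u i then TPos else TZero.
have Uu : Ubeta tl hd w c E P beta u.
  split; first by split => //; exists p.
  move=> i iE; rewrite /beta; case: ifP => h1 //; case: ifP => h2 //.
  by rewrite ler_norml !leNgt h1 h2.
apply: (@le_trans _ _ (JJrec tl hd w c Vp Vm k (FU tl hd w c E (Ubeta tl hd w c E P beta)) (Ubeta tl hd w c E P beta))).
  by rewrite IH (FU_eq Uu); apply: ereal_sup_ubound; exists u.
apply: ereal_sup_ubound; exists (Ubeta tl hd w c E P beta) => //.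
by exists beta; split => //; exists u.
Qed.

Lemma objZ (R: realType) n (Vp Vm : {set 'I_n}) (l : R) u :
  obj Vp Vm (l *: u) = l * obj Vp Vm u.
Proof. by rewrite /obj -scalemxAr mxE. Qed.

Lemma BalZ (R: realType) n m (tl hd : 'I_m -> 'I_n) E (l : R) u :
  Bal tl hd E u -> Bal tl hd E (l *: u).
Proof.
move=> Bu v; under eq_bigr do rewrite mxE.
by rewrite -mulr_sumr Bu mulr0.
Qed.

Lemma feasZ (R: realType) n m (tl hd : 'I_m -> 'I_n) (w c : 'I_m -> R) E (l : R) u :
  0 <= l <= 1 -> feasible tl hd w c E u -> feasible tl hd w c E (l *: u).
Proof.
move=> /andP[l0 l1] fu i iE; have := fu i iE.
have -> : flow tl hd w E (l *: u) i = l * flow tl hd w E u i.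
  by rewrite /flow -scalemxAr mxE mulrCA.
move=> h; rewrite normrM (ger0_norm l0).
apply: le_trans h; rewrite -[X in _ <= X]mul1r; apply: ler_wpM2r => //.
Qed.

Lemma base (R: realType) n m (tl hd : 'I_m -> 'I_n) (w c : 'I_m -> R) Vp Vm E P :
  JJrec tl hd w c Vp Vm 0 E P =
     ereal_sup [set Jrec tl hd w c Vp Vm 0 E p | p in P].
Proof.
rewrite /=; apply/eqP; rewrite eq_le; apply/andP; split; last first.
  apply: ge_ereal_sup => _ [p Pp <-].
  apply: le_ereal_sup => _ [u [[cu Bu] fu] <-]; exists u => //.
  by split => //; split => //; exists p => //; apply: subset_closure.
apply: ge_ereal_sup => _ [u [[Bu [p cp cpu]] fu] <-].
apply/lee_subgt0Pr => e e0.
set o := obj Vp Vm u.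
pose d := Order.min (1/2 : R) (e / (`|o| + 1)).
have hpos : 0 < `|o| + 1 by rewrite ltr_wpDl.
have d0 : 0 < d by rewrite lt_min; apply/andP; split; [lra | exact: divr_gt0].
have d1 : d <= 1/2 by rewrite ge_min lexx.
have d2 : d <= e / (`|o| + 1) by rewrite ge_min lexx orbT.
pose f v := if p v 0 == 0 then 1 else `|p v 0|.
pose a := d * \big[Order.min/1]_v f v.
have a0 : 0 < a.
  apply: mulr_gt0 => //; apply: lt_bigmin => // v _.
  by rewrite /f; case: eqP => // /eqP; rewrite normr_gt0.
have [q Pq hq] := clos_near cp a0.
have fa v : `|p v 0 - q v 0| < d * f v.
  apply: (lt_le_trans (hq v)); rewrite /a; apply: ler_wpM2l; [exact: ltW d0 | exact: bigmin_le].
apply: (@le_trans _ _ (J1 tl hd w c Vp Vm E q)); last first.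
  by apply: ereal_sup_ubound; exists q.
apply: (@le_trans _ _ (obj Vp Vm ((1-d) *: u))%:E); last first.
  apply: ereal_sup_ubound; exists ((1-d) *: u) => //; split; [split|].
  - move=> v; rewrite mxE; exact: scal_cube d0 d1 (cpu v) (fa v).
  - exact: BalZ.
  - apply: feasZ => //; apply/andP; split; lra.
rewrite objZ -EFinB lee_fin.
have := d2; rewrite ler_pdivlMr // => d3.
have := ler_wpM2l (ltW d0) (ler_norm o).
rewrite -/o; nra.
Qed.

Lemma mainlem (R: realType) n m (tl hd : 'I_m -> 'I_n) (w c : 'I_m -> R) Vp Vm k :
  forall E P, JJrec tl hd w c Vp Vm k E P =
     ereal_sup [set Jrec tl hd w c Vp Vm k E p | p in P].
Proof.
elim: k => [|k IH]; first exact: base.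
exact: step.
Qed.

Theorem theorem1 (R : realType) (n m : nat) (tl hd : 'I_m -> 'I_n)
  (w c : 'I_m -> R) (Vp Vm : {set 'I_n}) (p0 : 'cV[R]_n) (N : nat) :
  [disjoint Vp & Vm]%B ->
  (forall i, 0 <= w i) -> (forall i, 0 <= c i) ->
  Bal tl hd [set: 'I_m]%SET p0 ->
  (1 <= N)%N ->
  forall (E : {set 'I_m}) (P : set 'cV[R]_n),
    reachable tl hd w c p0 E P ->
    forall t : nat, (1 <= t <= N)%N ->
      JJ tl hd w c Vp Vm t E P
      = ereal_sup [set J tl hd w c Vp Vm t E p | p in P].
Proof.
move=> _ _ _ _ _ E P _ t _.
exact: mainlem.
Qed.
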